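(* Let $\omega>0$ and let $\tau:[0,\omega]\to\mathbb{R}$ be a positive function, differentiable on $(0,\omega)$, satisfying $\alpha(x)+\chi(\tau(x))=0$ for all $x\in[0,\omega]$, where $\alpha$ and $\chi$ are convex functions with $\alpha$ increasing and $\chi$ decreasing. Assume there exists $x^*\in(0,\omega)$ with $\tau'(x^* )=\tau(x^* )/x^*$. Then $\frac{x^*}{\tau(x^* )}\ge\frac{y}{\tau(y)}$ for all $y\in[0,\omega]$. *)

(* Defs.v *)
From Stdlib Require Import Reals.
Open Scope R_scope.

Definition convex_on (D : R -> Prop) (f : R -> R) : Prop :=
  forall x y t, D x -> D y -> 0 <= t <= 1 ->
    f (t * x + (1 - t) * y) <= t * f x + (1 - t) * f y.

Definition strictly_increasing_on (D : R -> Prop) (f : R -> R) : Prop :=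
  forall x y, D x -> D y -> x < y -> f x < f y.

Definition strictly_decreasing_on (D : R -> Prop) (f : R -> R) : Prop :=
  forall x y, D x -> D y -> x < y -> f y < f x.

(* Main.v *)
Require Import Defs.
From Stdlib Require Import Reals Lra.
Open Scope R_scope.

Theorem lemma21 (omega : R) (tau alpha chi : R -> R) (xs : R) :
  0 < omega ->
  (forall x, 0 <= x <= omega -> 0 < tau x) ->
  (forall x, 0 < x < omega -> derivable_pt tau x) ->
  convex_on (fun x => 0 <= x <= omega) alpha ->
  strictly_increasing_on (fun x => 0 <= x <= omega) alpha ->
  convex_on (fun s => 0 < s) chi ->
  strictly_decreasing_on (fun s => 0 < s) chi ->
  (forall x, 0 <= x <= omega -> alpha x + chi (tau x) = 0) ->
  0 < xs < omega ->
  derivable_pt_lim tau xs (tau xs / xs) ->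
  forall y, 0 <= y <= omega -> xs / tau xs >= y / tau y.
Proof.
intros Hom Hpos _ Ha _ Hc Hcd Heq Hxs Hd y Hy.
assert (Hconv : forall x z t, 0 <= x <= omega -> 0 <= z <= omega -> 0 <= t <= 1 ->
  tau (t * x + (1 - t) * z) <= t * tau x + (1 - t) * tau z).
{ intros x z t Hx Hz Ht.
  assert (Hw : 0 <= t * x + (1 - t) * z <= omega) by nra.
  pose proof (Hpos x Hx). pose proof (Hpos z Hz). pose proof (Hpos _ Hw).
  assert (Hs : 0 < t * tau x + (1 - t) * tau z) by nra.
  pose proof (Hc (tau x) (tau z) t H H0 Ht).
  pose proof (Ha x z t Hx Hz Ht).
  pose proof (Heq x Hx). pose proof (Heq z Hz). pose proof (Heq _ Hw).
  destruct (Rlt_le_dec (t * tau x + (1 - t) * tau z) (tau (t * x + (1 - t) * z))) as [Hl|Hl];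
    [|lra].
  pose proof (Hcd _ _ Hs H1 Hl).
  replace (chi (tau x)) with (- alpha x) in H2 by lra.
  replace (chi (tau z)) with (- alpha z) in H2 by lra. lra. }
set (d := tau xs / xs).
assert (Hxd : 0 <= xs <= omega) by lra.
assert (Htan : tau y >= tau xs + d * (y - xs)).
{ apply Rnot_lt_ge; intro Hlt.
  set (a := y - xs).
  assert (Ha0 : a <> 0) by (intro E; unfold a in *; assert (y = xs) by lra; subst y; lra).
  assert (Hpa : 0 < Rabs a) by (apply Rabs_pos_lt; auto).
  set (eps := d * a - (tau y - tau xs)).
  assert (He : 0 < eps) by (unfold eps, a in *; lra).
  destruct (Hd (eps / Rabs a) ltac:(apply Rdiv_lt_0_compat; lra)) as [delta Hdel].
  pose proof (cond_pos delta) as Hdp.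
  set (t := Rmin 1 (delta / (2 * Rabs a))).
  assert (Ht1 : t <= 1) by apply Rmin_l.
  assert (Ht2 : t <= delta / (2 * Rabs a)) by apply Rmin_r.
  assert (Ht0 : 0 < t).
  { unfold t; apply Rmin_glb_lt; [lra|]. apply Rdiv_lt_0_compat; lra. }
  set (h := t * a).
  assert (Hh0 : h <> 0) by (unfold h; apply Rmult_integral_contrapositive; split; lra).
  assert (Hha : Rabs h = t * Rabs a) by (unfold h; rewrite Rabs_mult, Rabs_pos_eq; lra).
  assert (Hhd : Rabs h < delta).
  { rewrite Hha. apply Rle_lt_trans with (delta / (2 * Rabs a) * Rabs a).
    apply Rmult_le_compat_r; lra. replace (delta / (2 * Rabs a) * Rabs a) with (delta/2) by (field; lra). lra. }
  pose proof (Hdel h Hh0 Hhd) as Hq.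
  assert (Hcv : tau (xs + h) - tau xs <= d * h - t * eps).
  { replace (xs + h) with (t * y + (1 - t) * xs) by (unfold h, a; ring).
    pose proof (Hconv y xs t Hy Hxd ltac:(lra)). unfold eps, h, a in *. nra. }
  set (Q := (tau (xs + h) - tau xs) / h) in Hq.
  assert (HQ : Q * h = tau (xs + h) - tau xs) by (unfold Q; field; auto).
  assert (HE : eps / Rabs a * Rabs h = t * eps) by (rewrite Hha; field; lra).
  destruct (Rlt_or_le 0 a) as [Hap|Han].
  - assert (Hh : 0 < h) by (unfold h; nra).
    rewrite Rabs_pos_eq in Hha by lra.
    fold d in Hq; assert (- (eps / Rabs a) < Q - d) by (destruct (Rabs_def2 _ _ Hq); idtac; lra).
    assert (- (eps / Rabs a) * h < (Q - d) * h) by (apply Rmult_lt_compat_r; lra).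
    rewrite (Rabs_pos_eq h) in HE by lra. lra.
  - assert (Hh : h < 0) by (unfold h; assert (a < 0) by lra; nra).
    rewrite Rabs_left in Hha by lra.
    assert (Q - d < eps / Rabs a) by (fold d in Hq; destruct (Rabs_def2 _ _ Hq); lra).
    assert ((Q - d) * (- h) < eps / Rabs a * (- h)) by (apply Rmult_lt_compat_r; lra).
    rewrite (Rabs_left h) in HE by lra. lra. }
pose proof (Hpos y Hy) as Hty. pose proof (Hpos xs Hxd) as Htx.
assert (Hk : xs * tau y >= y * tau xs).
{ unfold d in Htan.
  assert (tau xs + tau xs / xs * (y - xs) = y * tau xs / xs) by (field; lra).
  rewrite H in Htan.
  assert (xs * (y * tau xs / xs) = y * tau xs) by (field; lra). nra. }
assert (xs / tau xs - y / tau y = (xs * tau y - y * tau xs) / (tau xs * tau y)) by (field; lra).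
assert (0 <= (xs * tau y - y * tau xs) / (tau xs * tau y)).
{ apply Rmult_le_pos; [lra|]. left; apply Rinv_0_lt_compat; nra. }
lra.
Qed.
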